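(* Let $r\ge 2$ and $s\ge 1$ be integers. If $F\in\mathcal{F}_r(n)$, then $\lambda(\overline{K}_s\vee F)=\lambda(\overline{K}_s\vee T_r(n))$.
   Context: $\lambda(\cdot)$ is the spectral radius of the adjacency matrix; $T_r(n)$ is the complete $r$-partite graph on $n$ vertices with part sizes differing by at most one; $\overline{K}_s$ is the edgeless graph on $s$ vertices and $\vee$ denotes the join. The family $\mathcal{F}_r(n)$: write $n=ra+b$ with $0\le b<r$ and $a=\lfloor n/r\rfloor\ge 1$. If $b=0$, $\mathcal{F}_r(n)$ is the set of all $(r-1)a$-regular graphs on $n$ vertices. If $1\le b<r$, $\mathcal{F}_r(n)$ is the set of all graphs $G$ on $n$ vertices having a partition $V(G)=X\sqcup Y$ with $|X|=b(a+1)$, $|Y|=(r-b)a$, such that every vertex of $X$ is adjacent to every vertex of $Y$, $G[X]$ is $(b-1)(a+1)$-regular, and $G[Y]$ is $(r-b-1)a$-regular. *)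

(* Defs.v *)
From HB Require Import structures.
From mathcomp Require Import all_boot all_order all_algebra all_field.
Set Implicit Arguments. Unset Strict Implicit. Unset Printing Implicit Defensive.
Import Order.TTheory GRing.Theory Num.Theory.
Local Open Scope ring_scope.

Definition simple_graph (n : nat) (e : rel 'I_n) : Prop :=
  symmetric e /\ irreflexive e.

Definition adj_mx (n : nat) (e : rel 'I_n) : 'M[algC]_n :=
  \matrix_(i, j) (e i j)%:R.

(* the eigenvalues of A, with multiplicity: the roots of its characteristic
   polynomial (which splits over the algebraically closed field algC) *)
Definition eigenvalues (n : nat) (A : 'M[algC]_n) : seq algC :=
  sval (closed_field_poly_normal (char_poly A)).

(* spectral radius: the maximum modulus of an eigenvalue (0 for the empty matrix) *)
Definition spectral_radius (n : nat) (A : 'M[algC]_n) : algC :=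
  \big[Num.max/0]_(z <- eigenvalues A) `|z|.

Definition lambda (n : nat) (e : rel 'I_n) : algC := spectral_radius (adj_mx e).

(* Turan graph T_r(n): vertices i, j adjacent iff i and j lie in different
   residue classes mod r; the r classes have sizes differing by at most one. *)
Definition turan (r n : nat) : rel 'I_n := fun i j => (i %% r)%N != (j %% r)%N.

(* join of the edgeless graph on s vertices with a graph e on n vertices;
   vertices of 'I_(s + n): the first s form \overline{K}_s, the last n form e *)
Definition join_empty (s n : nat) (e : rel 'I_n) : rel 'I_(s + n) :=
  fun u v => match split u, split v with
             | inl _, inl _ => false
             | inr x, inr y => e x y
             | _, _ => true
             end.

Definition deg_in (n : nat) (e : rel 'I_n) (S : {set 'I_n}) (x : 'I_n) : nat :=
  #|[set y in S | e x y]|.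

Definition regular (n : nat) (e : rel 'I_n) (k : nat) : Prop :=
  forall x : 'I_n, #|[set y | e x y]| = k.

(* the family F_r(n), with n = r a + b, 0 <= b < r, a = n %/ r >= 1 *)
Definition family_F (r n : nat) (e : rel 'I_n) : Prop :=
  let a := (n %/ r)%N in
  let b := (n %% r)%N in
  simple_graph e /\ (1 <= a)%N /\
  if b == 0%N then regular e ((r - 1) * a)
  else exists X : {set 'I_n},
      [/\ #|X| = (b * (a + 1))%N,
          #|~: X| = ((r - b) * a)%N,
          (forall x y, x \in X -> y \notin X -> e x y),
          (forall x, x \in X -> deg_in e X x = ((b - 1) * (a + 1))%N) &
          (forall y, y \notin X -> deg_in e (~: X) y = ((r - b - 1) * a)%N)].

Arguments turan r n : clear implicits.
Arguments join_empty s {n} e.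

(* Main.v *)
Require Import Defs.
From mathcomp Require Import all_boot all_order all_algebra all_field.
From mathcomp Require Import zify ring lra.
Set Implicit Arguments. Unset Strict Implicit. Unset Printing Implicit Defensive.
Import Order.TTheory GRing.Theory Num.Theory.

Lemma count_shift (P : pred nat) r m k :
  count (fun i => P (i %% r)) (iota (m * r) k) = count (fun i => P (i %% r)) (iota 0 k).
Proof.
rewrite -{1}(addn0 (m * r)) iotaDl count_map; apply: eq_count => i /=.
by rewrite modnMDl.
Qed.

Lemma count_mod (P : pred nat) r q k :
  count (fun i => P (i %% r)) (iota 0 (q * r + k)) =
  q * count (fun i => P (i %% r)) (iota 0 r) + count (fun i => P (i %% r)) (iota 0 k).
Proof.
rewrite iotaD count_cat add0n count_shift; congr (_ + _).
elim: q => [|q IH]; first by rewrite !mul0n.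
by rewrite mulSnr iotaD count_cat add0n count_shift IH mulSnr.
Qed.

Lemma count_small (P : pred nat) r k : k <= r ->
  count (fun i => P (i %% r)) (iota 0 k) = count P (iota 0 k).
Proof.
move=> kr; apply: eq_in_count => i; rewrite mem_iota add0n => /andP[_ ik].
by rewrite /= modn_small // (leq_trans ik kr).
Qed.

Lemma count_lt b m : b <= m -> count (fun t => t < b) (iota 0 m) = b.
Proof.
move=> bm; rewrite -(subnKC bm) iotaD count_cat add0n.
rewrite (@eq_in_count _ _ predT (iota 0 b)); last first.
  by move=> i; rewrite mem_iota => /andP[_ ]; rewrite add0n.
rewrite count_predT size_iota (@eq_in_count _ _ pred0); last first.
  by move=> i; rewrite mem_iota => /andP[bi _] /=; rewrite ltnNge bi.
by rewrite count_pred0 addn0.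
Qed.

Lemma count_ge b m : b <= m -> count (fun t => b <= t) (iota 0 m) = m - b.
Proof.
move=> bm; have := count_predC (fun t => t < b) (iota 0 m).
rewrite count_lt // size_iota => H.
have -> : count (fun t => b <= t) (iota 0 m) = count (predC (fun t => t < b)) (iota 0 m).
  by apply: eq_count => t /=; rewrite leqNgt.
lia.
Qed.

Lemma count_neq (Q : pred nat) c s : uniq s ->
  count (fun t => Q t && (c != t)) s + (Q c && (c \in s)) = count Q s.
Proof.
elim: s => [|x s IH] /=; first by rewrite andbF.
move=> /andP[xs us]; rewrite inE -(IH us).
case: (eqVneq c x) => [->|ne] /=.
  by rewrite (negPf xs) andbF; case: (Q x) => /=; lia.
by case: (Q x); case: (Q c && (c \in s)) => /=; lia.
Qed.

Lemma cnt_neq_all c m : c < m -> count (fun t => c != t) (iota 0 m) = m - 1.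
Proof.
move=> cm; have := count_neq predT c (iota_uniq 0 m).
rewrite count_predT size_iota mem_iota /= cm => H; lia.
Qed.

Lemma cnt_lt_neq b c m : c < b -> b <= m ->
  count (fun t => (t < b) && (c != t)) (iota 0 m) = b - 1.
Proof.
move=> cb bm; have := count_neq (fun t => t < b) c (iota_uniq 0 m).
by rewrite count_lt // mem_iota /= cb (leq_trans cb bm) => H; lia.
Qed.

Lemma cnt_ge_neq b c m : b <= c -> c < m ->
  count (fun t => (b <= t) && (c != t)) (iota 0 m) = m - b - 1.
Proof.
move=> bc cm; have := count_neq (fun t => b <= t) c (iota_uniq 0 m).
by rewrite count_ge ?(leq_trans bc (ltnW cm)) // mem_iota /= bc cm => H; lia.
Qed.

Lemma cnt_ge_neq0 b c : b <= c ->
  count (fun t => (b <= t) && (c != t)) (iota 0 b) = 0.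
Proof.
move=> bc; have := count_neq (fun t => b <= t) c (iota_uniq 0 b).
rewrite count_ge // subnn mem_iota /= bc; lia.
Qed.

Lemma card_count n (P : pred nat) :
  #|[set i : 'I_n | P i]| = count P (iota 0 n).
Proof.
rewrite -sum1_card -sum1_count.
rewrite (eq_bigl (fun i : 'I_n => P i)); last by move=> i; rewrite inE.
by rewrite -(big_mkord P (fun _ => 1%N)) /index_iota subn0.
Qed.

Lemma card_countP n (P : pred nat) (A : {set 'I_n}) :
  (forall i : 'I_n, (i \in A) = P i) -> #|A| = count P (iota 0 n).
Proof.
move=> H; rewrite -card_count; apply: eq_card => i; by rewrite inE H.
Qed.



Lemma turan_family r n : 2 <= r -> 1 <= n %/ r -> family_F r (turan r n).
Proof.
move=> r2 a1.
have r0 : 0 < r by lia.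
rewrite /family_F.
set a := n %/ r; set b := n %% r.
have nE : n = a * r + b by rewrite /a /b -divn_eq.
have br : b < r by rewrite /b ltn_mod.
split.
  split; first by move=> i j; rewrite /turan eq_sym.
  by move=> i; rewrite /turan eqxx.
split => //.
case: eqP => [b0|/eqP bn0].
  move=> x.
  have cr : x %% r < r by rewrite ltn_mod.
  rewrite (@card_countP _ (fun t => x %% r != t %% r)); last by move=> y; rewrite !inE.
  move: (x %% r) cr => c cr.
  rewrite nE b0 addn0 -(addn0 (a * r)).
  rewrite (count_mod (fun u => c != u)) (count_small (fun u => c != u)) // cnt_neq_all //.
  simpl; lia.
exists [set i : 'I_n | i %% r < b].
have cX : #|[set i : 'I_n | i %% r < b]| = b * (a + 1).
  rewrite (@card_countP _ (fun t => t %% r < b)); last by move=> y; rewrite !inE.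
  rewrite nE (count_mod (fun u => u < b)) !(count_small (fun u => u < b)) ?(ltnW br) //.
  rewrite !count_lt ?(ltnW br) //; lia.
split => //.
- have := cardsC [set i : 'I_n | i %% r < b]; rewrite card_ord cX => H.
  have : n = b * (a + 1) + (r - b) * a.
    rewrite nE; have -> : r = b + (r - b) by lia.
    nia.
  by move=> nE2; apply: (@addnI (b * (a + 1))); rewrite H.
- move=> x y; rewrite !inE /turan -leqNgt => xb yb.
  by apply/eqP => E; move: xb; rewrite E ltnNge yb.
- move=> x; rewrite inE => xb.
  rewrite /deg_in.
  rewrite (@card_countP _ (fun t => (t %% r < b) && (x %% r != t %% r))); last by move=> y; rewrite !inE.
  move: (x %% r) xb => c xb.
  rewrite nE (count_mod (fun u => (u < b) && (c != u))).
  rewrite !(count_small (fun u => (u < b) && (c != u))) ?(ltnW br) // !(@cnt_lt_neq b) ?(ltnW br) //.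
  simpl; lia.
- move=> x; rewrite inE -leqNgt => xb.
  have cr : x %% r < r by rewrite ltn_mod.
  rewrite /deg_in.
  rewrite (@card_countP _ (fun t => (b <= t %% r) && (x %% r != t %% r))); last by move=> y; rewrite !inE -leqNgt.
  move: (x %% r) xb cr => c xb cr.
  rewrite nE (count_mod (fun u => (b <= u) && (c != u))).
  rewrite !(count_small (fun u => (b <= u) && (c != u))) ?(ltnW br) // (@cnt_ge_neq b) // cnt_ge_neq0 //.
  simpl; lia.
Qed.

Local Open Scope ring_scope.

Lemma ex_maxC (T : finType) (f : T -> algC) (i0 : T) :
  (forall i, f i \is Num.real) -> exists i, forall j, f j <= f i.
Proof.
move=> fR.
suff [i Hi] : exists i, forall j, j \in enum T -> f j <= f i.
  by exists i => j; apply: Hi; rewrite mem_enum.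
elim: (enum T) => [|x s [i Hi]]; first by exists i0.
have [le|le] := real_leP (fR x) (fR i).
  by exists i => j; rewrite inE => /orP[/eqP->//|/Hi].
exists x => j; rewrite inE => /orP[/eqP->//|/Hi H].
by apply: le_trans H (ltW le).
Qed.

Lemma bigmax_eq (s : seq algC) (rho : algC) :
  0 <= rho -> (forall z, z \in s -> `|z| <= rho) -> rho \in map (fun z => `|z|) s ->
  \big[Num.max/0]_(z <- s) `|z| = rho.
Proof.
move=> r0.
suff H : (forall z, z \in s -> `|z| <= rho) ->
  0 <= \big[Num.max/0]_(z <- s) `|z| <= rho /\
  (rho \in map (fun z => `|z|) s -> \big[Num.max/0]_(z <- s) `|z| = rho).
  by move=> Hs Hin; case: (H Hs) => _; apply.
elim: s => [|x s IH] Hs.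
  by rewrite big_nil lexx r0; split.
have Hs' : forall z, z \in s -> `|z| <= rho by move=> z zs; apply: Hs; rewrite inE zs orbT.
have Hx : `|x| <= rho by apply: Hs; rewrite inE eqxx.
case: (IH Hs') => /andP[m0 mr] Hm.
rewrite big_cons; move: m0 mr Hm; set m := \big[_/_]_(_ <- _) _ => m0 mr Hm.
rewrite /Num.max /Order.max /=.
split.
  by case: ifP => _; rewrite ?m0 ?mr ?Hx ?normr_ge0.
rewrite inE => /orP[/eqP E|E].
  rewrite -E; case: ifPn => // lt; exfalso.
  by move: (lt_le_trans lt mr); rewrite E ltxx.
rewrite (Hm E); case: ifPn => // nlt.
apply/eqP; rewrite eq_le Hx /=.
move: nlt; rewrite lt_def negb_and negbK => /orP[/eqP->//|].
by rewrite Hx.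
Qed.

Lemma spec_rad_eig m (A : 'M[algC]_m) (v : 'rV[algC]_m) rho (i0 : 'I_m) :
  (forall i j, 0 <= A i j) -> (forall i, 0 < v 0 i) -> 0 <= rho ->
  v *m A = rho *: v -> spectral_radius A = rho.
Proof.
move=> A0 v0 r0 vA.
rewrite /spectral_radius /eigenvalues.
case: (closed_field_poly_normal (char_poly A)) => s /= Hp.
have Hs : forall z, (z \in s) = eigenvalue A z.
  move=> z; rewrite eigenvalue_root_char Hp (monicP (char_poly_monic A)).
  by rewrite scale1r root_prod_XsubC.
apply: bigmax_eq => //.
  move=> z; rewrite Hs => /eigenvalueP [w wA wn0].
  have [j /eqP wj] : exists j, w 0 j != 0.
    apply/existsP; move: wn0; apply: contraR; rewrite negb_exists => /forallP H.
    by apply/eqP/matrixP => i k; rewrite (ord1 i) mxE; apply/eqP; move: (H k); rewrite negbK.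
  have qR : forall i, `|w 0 i| / v 0 i \is Num.real.
    by move=> i; apply: ger0_real; rewrite divr_ge0 // ltW.
  have [i Hi] := ex_maxC i0 qR.
  set q := `|w 0 i| / v 0 i in Hi.
  have vi0 : v 0 i != 0 by rewrite gt_eqF.
  have qpos : 0 < q.
    apply: lt_le_trans (Hi j); rewrite divr_gt0 //.
    by rewrite normr_gt0; apply/eqP.
  have wiq : `|w 0 i| = q * v 0 i by rewrite /q mulfVK.
  have wjle : forall k, `|w 0 k| <= q * v 0 k.
    move=> k; have := Hi k; rewrite ler_pdivrMr //.
  have wi0 : 0 < `|w 0 i| by rewrite wiq mulr_gt0.
  rewrite -(ler_pM2r wi0).
  have e1 : `|z| * `|w 0 i| = `|(w *m A) 0 i|.
    by rewrite wA mxE normrM.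
  rewrite e1 mxE.
  apply: le_trans (ler_norm_sum _ _ _) _.
  have e2 : rho * `|w 0 i| = q * (v *m A) 0 i.
    by rewrite vA mxE wiq mulrCA.
  rewrite e2 mxE mulr_sumr; apply: ler_sum => k _.
  rewrite normrM (ger0_norm (A0 _ _)) mulrA ler_wpM2r //.
rewrite -{1}(ger0_norm r0) map_f // Hs; apply/eigenvalueP; exists v => //.
apply/eqP => v00; have := v0 i0; rewrite v00 mxE ltxx //.
Qed.

Definition joinvec s n (alpha : algC) (f : 'I_n -> algC) : 'rV[algC]_(s + n) :=
  \row_(u < s + n) (match split u with inl _ => alpha | inr y => f y end).

Lemma split_l m n (i : 'I_m) : split (lshift n i) = inl i.
Proof. exact: (unsplitK (inl i : 'I_m + 'I_n)). Qed.
Lemma split_r m n (i : 'I_n) : split (rshift m i) = inr i.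
Proof. exact: (unsplitK (inr i : 'I_m + 'I_n)). Qed.

Lemma join_eig s n (F : rel 'I_n) (alpha rho : algC) (f : 'I_n -> algC) :
  \sum_y f y = rho * alpha ->
  (forall x, s%:R * alpha + \sum_(y | F y x) f y = rho * f x) ->
  joinvec s alpha f *m adj_mx (join_empty s F) = rho *: joinvec s alpha f.
Proof.
move=> HK HF; apply/matrixP => i j; rewrite (ord1 i) !mxE big_split_ord /=.
rewrite /joinvec /adj_mx /join_empty.
rewrite -(splitK j); case: (split j) => [k|x] /=; rewrite ?split_l ?split_r.
  under eq_bigr do rewrite !mxE !split_l mulr0.
  under [X in _ + X]eq_bigr do rewrite !mxE split_r split_l mulr1.
  by rewrite big1 // add0r HK.
under eq_bigr do rewrite !mxE split_l split_r mulr1.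
under [X in _ + X]eq_bigr do rewrite !mxE !split_r.
rewrite sumr_const card_ord -HF mulr_natl; congr (_ + _).
rewrite [RHS]big_mkcond /=; apply: eq_bigr => y _.
by case: (F y x); rewrite ?mulr1 ?mulr0.
Qed.

Lemma natineq (s a x y N : nat) : (1 <= a)%N -> N = (s + x + y)%N ->
  (y*N*(N+a+1) + s*x*(N+a) + s*y*(N+a+1) <= N*(N+a)*(s+a+1+y))%N.
Proof.
move=> a1 ->; nia.
Qed.

Lemma ivt_algR (p : {poly algR}) (N : algR) : 0 <= N ->
  p.[0] < 0 -> 0 <= p.[N] -> exists2 x, 0 < x & root p x.
Proof.
move=> N0 p0 pN.
have := @poly_ivt _ p 0 N N0; rewrite (ltW p0) pN => /(_ isT) [x /andP[x0 xN] rx].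
exists x => //; rewrite lt_def x0 andbT; apply: contraTneq rx => ->.
by rewrite /root lt_eqF.
Qed.

Lemma cubic_root (s a x y d : nat) : (0 < s)%N -> (0 < a)%N -> (0 < x)%N ->
  x = (d + (a+1))%N ->
  exists2 rho : algC, 0 < rho &
   rho * (rho*(rho + a%:R) - d%:R*(rho+a%:R) - y%:R*(rho+a%:R+1)) =
   s%:R * (x%:R*(rho+a%:R) + y%:R*(rho+a%:R+1)).
Proof.
move=> s0 a0 x0 xd.
pose A : {poly algR} := (a%:R : algR)%:P; pose D : {poly algR} := (d%:R : algR)%:P.
pose Y : {poly algR} := (y%:R : algR)%:P; pose S : {poly algR} := (s%:R : algR)%:P.
pose X : {poly algR} := (x%:R : algR)%:P.
pose pp := 'X * ('X * ('X + A) - D * ('X + A) - Y * ('X + A + 1))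
   - S * (X * ('X + A) + Y * ('X + A + 1)).
have [z z0 rz] : exists2 z, 0 < z & root pp z.
  apply: (@ivt_algR _ (s + x + y)%:R); first by rewrite ler0n.
    rewrite /pp /A /D /Y /S /X !hornerE.
    rewrite oppr_lt0 mulr_gt0 ?ltr0n // ltr_wpDr ?mulr_ge0 ?addr_ge0 ?ler0n //.
    by rewrite mulr_gt0 ?ltr0n.
  rewrite /pp /A /D /Y /S /X !hornerE.
  set N := (s + x + y)%N.
  have EN : (N%:R : algR) - d%:R = (s + a + 1 + y)%:R.
    by apply/eqP; rewrite subr_eq -natrD; apply/eqP; congr (_%:R); rewrite /N xd; lia.
  have -> : (N%:R : algR) * ((N%:R : algR) * (N%:R + a%:R) - d%:R * (N%:R + a%:R) - y%:R * (N%:R + a%:R + 1)) -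
    s%:R * (x%:R * (N%:R + a%:R) + y%:R * (N%:R + a%:R + 1)) =
    (N*(N+a))%:R * (s+a+1+y)%:R - (y*N*(N+a+1) + s*x*(N+a) + s*y*(N+a+1))%:R.
    rewrite -EN !natrD !natrM !natrD; ring.
  by rewrite -natrM subr_ge0 ler_nat natineq.
exists (algRval z) => //.
move: rz; rewrite /root /pp /A /D /Y /S /X !hornerE => /eqP E.
apply/eqP; rewrite -subr_eq0; apply/eqP.
have := congr1 algRval E.
rewrite !(rmorphB algRval) !(rmorphM algRval) !(rmorphD algRval) !(rmorphM algRval) !(rmorph_nat algRval) ?(rmorph1 algRval) ?(rmorph0 algRval). move=> H; rewrite -[RHS]H; ring.
Qed.

Lemma quad_root (s a n k : nat) : (0 < s)%N -> (0 < n)%N -> n = (k + a)%N ->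
  exists2 rho : algC, 0 < rho & rho * (rho - k%:R) = s%:R * n%:R.
Proof.
move=> s0 n0 nk.
pose K : {poly algR} := (k%:R : algR)%:P.
pose S : {poly algR} := (s%:R : algR)%:P.
pose M : {poly algR} := (n%:R : algR)%:P.
pose pp := 'X * ('X - K) - S * M.
have [z z0 rz] : exists2 z, 0 < z & root pp z.
  apply: (@ivt_algR _ (s + n)%:R); first by rewrite ler0n.
    rewrite /pp /K /S /M !hornerE.
    by rewrite oppr_lt0 mulr_gt0 ?ltr0n.
  rewrite /pp /K /S /M !hornerE.
  have -> : ((s + n)%:R : algR) - k%:R = (s + a)%:R.
    by apply/eqP; rewrite subr_eq -natrD; apply/eqP; congr (_%:R); lia.
  by rewrite -!natrM subr_ge0 ler_nat; nia.
exists (algRval z) => //.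
move: rz; rewrite /root /pp /K /S /M !hornerE => /eqP E.
apply/eqP; rewrite -subr_eq0; apply/eqP.
have := congr1 algRval E.
rewrite !(rmorphB algRval) !(rmorphM algRval) !(rmorph_nat algRval) ?(rmorph0 algRval).
move=> H; rewrite -[RHS]H; ring.
Qed.

Lemma join_rad s n (F : rel 'I_n) (alpha rho : algC) (f : 'I_n -> algC) :
  (0 < s + n)%N -> 0 < alpha -> (forall x, 0 < f x) -> 0 <= rho ->
  \sum_y f y = rho * alpha ->
  (forall x, s%:R * alpha + \sum_(y | F y x) f y = rho * f x) ->
  lambda (join_empty s F) = rho.
Proof.
move=> sn a0 f0 r0 HK HF; rewrite /lambda.
apply: (@spec_rad_eig _ _ (joinvec s alpha f) _ (Ordinal sn)) => //.
- by move=> i j; rewrite mxE ler0n.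
- by move=> i; rewrite mxE; case: (split i).
- exact: join_eig.
Qed.

Lemma sum_if n (P : pred 'I_n) (X : {set 'I_n}) (be ga : algC) :
  \sum_(y | P y) (if y \in X then be else ga) =
  be *+ #|[set y in X | P y]| + ga *+ #|[set y in ~: X | P y]|.
Proof.
rewrite (bigID (fun y => y \in X)) /=; congr (_ + _).
  rewrite -sumr_const; apply: eq_big => [y|y /andP[_ ->]] //.
  by rewrite !inE andbC.
rewrite -sumr_const; apply: eq_big => [y|y /andP[_ /negPf ->]] //.
by rewrite !inE andbC.
Qed.

Lemma sum_constP n (P : pred 'I_n) (c : algC) :
  \sum_(y | P y) c = c *+ #|[set y | P y]|.
Proof. by rewrite -sumr_const; apply: eq_bigl => y; rewrite inE. Qed.

Lemma fam_reg r s n (F : rel 'I_n) (rho : algC) :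
  (1 <= s)%N -> (n %% r = 0)%N -> family_F r F -> 0 < rho ->
  rho * (rho - ((r - 1) * (n %/ r))%:R) = s%:R * n%:R ->
  lambda (join_empty s F) = rho.
Proof.
move=> s1 b0 [[Fsym Firr] [a1]] + r0 H.
rewrite b0 eqxx => Freg.
have n0 : (0 < n)%N.
  by rewrite lt0n; apply/eqP => n0; move: a1; rewrite n0 div0n.
apply: (@join_rad _ _ _ n%:R rho (fun _ => rho)) => //.
- lia.
- by rewrite ltr0n.
- by rewrite ltW.
  by rewrite sumr_const card_ord mulr_natr.
- move=> x; rewrite sum_constP.
  have -> : #|[set y | F y x]| = ((r - 1) * (n %/ r))%N.
    rewrite -(Freg x); apply: eq_card => y; by rewrite !inE Fsym.
  rewrite -mulr_natr. rewrite -[RHS]subr0 -(subrr (rho * (rho - ((r - 1) * (n %/ r))%:R))).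
  rewrite {2}H; ring.
Qed.

Lemma fam_irr r s n (F : rel 'I_n) (rho : algC) :
  (2 <= r)%N -> (1 <= s)%N -> (n %% r != 0)%N -> family_F r F -> 0 < rho ->
  rho * (rho * (rho + (n %/ r)%:R) - ((n %% r - 1) * (n %/ r + 1))%:R * (rho + (n %/ r)%:R)
         - ((r - n %% r) * (n %/ r))%:R * (rho + (n %/ r)%:R + 1)) =
  s%:R * ((n %% r * (n %/ r + 1))%:R * (rho + (n %/ r)%:R)
          + ((r - n %% r) * (n %/ r))%:R * (rho + (n %/ r)%:R + 1)) ->
  lambda (join_empty s F) = rho.
Proof.
move=> r2 s1 bn0 [[Fsym Firr] [a1]] + r0.
rewrite (negPf bn0) => -[X [cX cY cross degX degY]].
have br : ((n %% r)%N < r)%N by rewrite ltn_mod; lia.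
move: a1 bn0 br cX cY degX degY.
set a := (n %/ r)%N; set b := (n %% r)%N => a1 bn0 br cX cY degX degY.
set x := (b * (a + 1))%N; set y := ((r - b) * a)%N; set d := ((b - 1) * (a + 1))%N.
set dY := ((r - b - 1) * a)%N.
move=> H.
have ex : x%:R = d%:R + a%:R + 1 :> algC.
  rewrite -natrD natr1; congr (_%:R); rewrite /x /d; case: (b) bn0 => // b' _; rewrite subn1 /= mulSn; lia.
have ey : y%:R = dY%:R + a%:R :> algC.
  rewrite -natrD; congr (_%:R); rewrite /y /dY; move: br; set c := (r - b - 1)%N => br.
  have -> : (r - b = c.+1)%N by rewrite /c; lia.
  rewrite mulSn; lia.
have rn0 : rho != 0 by rewrite gt_eqF.
set be := rho + a%:R; set ga := rho + a%:R + 1.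
have be0 : 0 < be by rewrite /be ltr_wpDr ?ler0n.
have ga0 : 0 < ga by rewrite /ga ltr_wpDr // ltr_wpDr ?ler0n.
pose al := (x%:R * be + y%:R * ga) / rho.
have Hs : s%:R * al = rho * be - d%:R * be - y%:R * ga.
  by rewrite /al mulrA -H mulrC mulrA mulVf // mul1r.
have n0 : (0 < n)%N.
  by rewrite lt0n; apply/eqP => n0; move: a1; rewrite /a n0 div0n.
apply: (@join_rad _ _ _ al rho (fun z => if z \in X then be else ga)) => //.
- lia.
- rewrite /al divr_gt0 // ltr_wpDr ?mulr_ge0 ?ler0n ?ltW //.
  by rewrite mulr_gt0 // ltr0n /x; rewrite muln_gt0; apply/andP; split; lia.
- by move=> z; case: (z \in X).
- by rewrite ltW.
- rewrite (sum_if xpredT).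
  rewrite (_ : #|[set y in X | xpredT y]| = #|X|); last by apply: eq_card => z; rewrite !inE andbT.
  rewrite (_ : #|[set y in ~: X | xpredT y]| = #|~: X|); last by apply: eq_card => z; rewrite !inE andbT.
  rewrite cX cY /al [rho * _]mulrC divfK //.
  by rewrite -[be *+ _]mulr_natl -[ga *+ _]mulr_natl.
- move=> z.
  rewrite (eq_bigl (fun y => F z y)); last by move=> w; rewrite Fsym.
  rewrite sum_if.
  case: (boolP (z \in X)) => zX.
    rewrite (_ : #|[set y in X | F z y]| = d); last exact: (degX z zX).
    rewrite (_ : #|[set y in ~: X | F z y]| = y); last first.
      rewrite /y -cY; apply: eq_card => w; rewrite !inE.
      case: (boolP (w \in X)) => //= wX; exact: cross.
    rewrite -[be *+ _]mulr_natl -[ga *+ _]mulr_natl Hs /ga /be; ring.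
  rewrite (_ : #|[set y in ~: X | F z y]| = dY); last exact: (degY z zX).
  rewrite (_ : #|[set y in X | F z y]| = x); last first.
    rewrite /x -cX; apply: eq_card => w; rewrite !inE.
    case: (boolP (w \in X)) => //= wX; rewrite Fsym; exact: cross.
  rewrite -[be *+ _]mulr_natl -[ga *+ _]mulr_natl Hs ex ey /ga /be; ring.
Qed.

Theorem lemma3p5 (r s n : nat) (hr : (2 <= r)%N) (hs : (1 <= s)%N)
  (F : rel 'I_n) (hF : family_F r F) :
  lambda (join_empty s F) = lambda (join_empty s (turan r n)).
Proof.
have a1 : (1 <= n %/ r)%N by case: hF => _ [].
have hT := turan_family hr a1.
have r0 : (0 < r)%N by apply: ltnW.
have n0 : (0 < n)%N.
  by rewrite lt0n; apply/eqP => n0; move: a1; rewrite n0 div0n.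
case: (eqVneq (n %% r)%N 0%N) => [b0|bn0].
  have nk : n = ((r - 1) * (n %/ r) + n %/ r)%N.
    rewrite -mulSnr subn1 prednK // {1}(divn_eq n r) b0 addn0 mulnC //.
  have [rho rp Hr] := quad_root hs n0 nk.
  by rewrite (fam_reg hs b0 hF rp Hr) (fam_reg hs b0 hT rp Hr).
have br : (n %% r < r)%N by rewrite ltn_mod.
have xd : ((n %% r) * (n %/ r + 1) = ((n %% r) - 1) * (n %/ r + 1) + (n %/ r + 1))%N.
  by case: (n %% r)%N bn0 => // b' _; rewrite subn1 /= mulSn addnC.
have x0 : (0 < (n %% r) * (n %/ r + 1))%N by rewrite muln_gt0 lt0n bn0 addn1.
have [rho rp Hr] := cubic_root ((r - n %% r) * (n %/ r))%N hs a1 x0 xd.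
by rewrite (fam_irr hr hs bn0 hF rp Hr) (fam_irr hr hs bn0 hT rp Hr).
Qed.
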